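(* Let $f(t)\in\mathbb{F}_2[t]$ be an irreducible polynomial with $f(t)\neq t$ that is not self-reciprocal, and let $R_f=\mathbb{F}_2[t,t^{-1},f(t)^{-1}]$. Then the only ring automorphism of $R_f$ is the identity.
   Context: The reciprocal of a polynomial $f(t)$ of degree $m$ is $t^m f(1/t)$; $f$ is self-reciprocal if it equals its reciprocal. *)

(* Defs.v *)
From HB Require Import structures.
From mathcomp Require Import all_boot all_order all_algebra.
From mathcomp Require Import fraction.
Set Implicit Arguments. Unset Strict Implicit. Unset Printing Implicit Defensive.
Import GRing.Theory.
Local Open Scope ring_scope.


(* The reciprocal t^m f(1/t) of a polynomial f of degree m (size f = m+1). *)
Definition reciprocal (f : {poly 'F_2}) : {poly 'F_2} :=
  \poly_(i < size f) f`_(size f - 1 - i).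

Definition self_reciprocal (f : {poly 'F_2}) : Prop := reciprocal f = f.

Definition inRf (f : {poly 'F_2}) (x : {fraction {poly 'F_2}}) : Prop :=
  exists (p : {poly 'F_2}) (a b : nat),
    x = tofrac p / tofrac ('X ^+ a * f ^+ b).

Definition is_ring_aut_Rf (f : {poly 'F_2})
    (phi : {fraction {poly 'F_2}} -> {fraction {poly 'F_2}}) : Prop :=
  (forall x, inRf f x -> inRf f (phi x)) /\
  (forall x y, inRf f x -> inRf f y -> phi (x + y) = phi x + phi y) /\
  (forall x y, inRf f x -> inRf f y -> phi (x * y) = phi x * phi y) /\
  phi 1 = 1 /\
  (forall x y, inRf f x -> inRf f y -> phi x = phi y -> x = y) /\
  (forall y, inRf f y -> exists2 x, inRf f x & phi x = y).

(* Main.v *)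
Require Import Defs.
From HB Require Import structures.
From mathcomp Require Import all_boot all_order all_algebra.
From mathcomp Require Import fraction.
From mathcomp Require Import zify ring lra.
Set Implicit Arguments. Unset Strict Implicit. Unset Printing Implicit Defensive.
Import GRing.Theory Num.Theory.
Local Open Scope ring_scope.


Lemma F2_cases (x : 'F_2) : x = 0 \/ x = 1.
Proof. by case: x => [[|[|//]] Hi]; [left|right]; apply: val_inj. Qed.

Lemma F2_neq0 (x : 'F_2) : x != 0 -> x = 1.
Proof. by case: (F2_cases x) => ->; rewrite ?eqxx. Qed.

Lemma F2_monic (p : {poly 'F_2}) : p != 0 -> p \is monic.
Proof. by move=> p0; apply/monicP/F2_neq0; rewrite lead_coef_eq0. Qed.

Lemma X_irr : irreducible_poly ('X : {poly 'F_2}).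
Proof. by have := irredp_XsubC (0 : 'F_2); rewrite polyC0 subr0. Qed.

Lemma irr_prime (g p q : {poly 'F_2}) : irreducible_poly g ->
  g %| p * q -> (g %| p) || (g %| q).
Proof.
move=> ig gpq.
have [c1|cg] := irredp_XsubCP ig (dvdp_gcdl g p).
  have cop : coprimep g p by rewrite coprimep_def size_poly_eq1.
  by rewrite -(Gauss_dvdpr q cop) gpq orbT.
by rewrite -(eqp_dvdl p cg) dvdp_gcdr.
Qed.

Lemma reciprocal_XsubC1 : self_reciprocal ('X - 1%:P : {poly 'F_2}).
Proof.
rewrite /self_reciprocal /reciprocal size_XsubC.
apply/polyP=> i; rewrite coef_poly.
case: i => [|[|i]] //=; rewrite !coefB !coefX !coefC //=.
all: rewrite ?subr0 ?sub0r ?subrr //; by apply/val_inj.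
Qed.

Section F.
Variable f : {poly 'F_2}.
Hypothesis firr : irreducible_poly f.
Hypothesis fX : f != 'X.
Hypothesis fnsr : ~ self_reciprocal f.

Lemma f_neq0 : f != 0. Proof. exact: irredp_neq0. Qed.
Lemma f_size : (1 < size f)%N. Proof. by case: firr. Qed.
Lemma f_lead : lead_coef f = 1. Proof. by apply/F2_neq0; rewrite lead_coef_eq0 f_neq0. Qed.

Lemma f_root0 : ~~ root f 0.
Proof.
apply/negP=> r0.
have : ('X - 0%:P) %| f by rewrite dvdp_XsubCl.
rewrite polyC0 subr0 => Xf.
have := firr; case=> _ /(_ 'X); rewrite size_polyX => /(_ isT Xf).
rewrite eqp_monic ?monicX ?F2_monic ?f_neq0 // => /eqP Xe.
by move: fX; rewrite Xe eqxx.
Qed.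

Lemma f_root1 : ~~ root f 1.
Proof.
apply/negP=> r1.
have Xf : ('X - 1%:P) %| f by rewrite dvdp_XsubCl.
have := firr; case=> _ /(_ ('X - 1%:P)); rewrite size_XsubC => /(_ isT Xf).
rewrite eqp_monic ?monicXsubC ?F2_monic ?f_neq0 // => /eqP Xe.
by apply: fnsr; rewrite -Xe; apply: reciprocal_XsubC1.
Qed.

Lemma f_coef0 : f`_0 = 1.
Proof. by apply/F2_neq0; rewrite -horner_coef0; apply: f_root0. Qed.

Lemma f_eval1 : f.[1] = 1.
Proof. by apply/F2_neq0; apply: f_root1. Qed.

End F.


Section F.
Variable f : {poly 'F_2}.
Hypothesis firr : irreducible_poly f.

Lemma peel (g p q r : {poly 'F_2}) : irreducible_poly g ->
  p * q = r * g ->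
  (forall p q, p * q = r -> exists i j, p = 'X ^+ i * f^+j) ->
  (forall p', p = p' * g -> (exists i j, p' = 'X ^+ i * f^+j) -> exists i j, p = 'X ^+ i * f^+j) ->
  exists i j, p = 'X ^+ i * f^+j.
Proof.
move=> ig e IH step.
have g0 : g != 0 by apply: irredp_neq0.
have : g %| p * q by rewrite e dvdp_mull.
move/(irr_prime ig); case/orP => /dvdpP [c ec].
  apply: (step c ec); apply: (IH c q); apply: (mulIf g0).
  by rewrite -e ec mulrAC.
apply: (IH p c); apply: (mulIf g0); by rewrite -e ec mulrA.
Qed.

Lemma div_unit N M (p q : {poly 'F_2}) :
  p * q = 'X ^+ N * f^+M -> exists i j, p = 'X ^+ i * f^+j.
Proof.
elim: N M p q => [|N IHN] M.
  rewrite expr0 mul1r.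
  elim: M => [|M IHM] p q.
    rewrite expr0 => pq1.
    have p0 : p != 0 by apply: contra_eq_neq pq1 => ->; rewrite mul0r eq_sym oner_neq0.
    have q0 : q != 0 by apply: contra_eq_neq pq1 => ->; rewrite mulr0 eq_sym oner_neq0.
    have := congr1 (fun r : {poly 'F_2} => size r) pq1; rewrite size_mul // size_poly1.
    move: (size_poly_gt0 p) (size_poly_gt0 q); rewrite p0 q0 => sp sq e.
    have : size p == 1%N.
      rewrite eqn_leq sp andbT; move: e sq; case: (size q) => // n; rewrite addnS /= => e _.
      move: e; case: (size p) => [|[|k]] //.
    case/size_poly1P => c c0 ->; exists 0%N, 0%N.
    by rewrite (F2_neq0 c0) !expr0 mulr1.
  move=> e; have e' : p * q = f ^+ M * f by rewrite e exprS mulrC.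
  apply: (peel firr e' IHM).
  move=> p' -> [i [j ->]]; exists i, j.+1; rewrite exprS; ring.
move=> p q e; have e' : p * q = ('X ^+ N * f ^+ M) * 'X by rewrite e exprS; ring.
apply: (peel X_irr e' (IHN M)).
move=> p' -> [i [j ->]]; exists i.+1, j; rewrite exprS; ring.
Qed.
End F.


Notation K := {fraction {poly 'F_2}}.

Lemma int_split (x : int) : exists xp xn : nat, x = xp%:Z - xn%:Z /\ (xp = 0 \/ xn = 0)%N.
Proof.
case: x => n; first by exists n, 0%N; split; [rewrite subr0 | right].
by exists 0%N, n.+1; split; [rewrite NegzE sub0r | left].
Qed.

Lemma tofrac_inj (p q : {poly 'F_2}) : tofrac p = tofrac q -> p = q.
Proof. by move/eqP; rewrite tofrac_eq => /eqP. Qed.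

Lemma mup0X n : mup 0 ('X ^+ n : {poly 'F_2}) = n.
Proof. by have := mup_XsubCX n (0 : 'F_2) 0; rewrite polyC0 subr0 eqxx. Qed.

Section F.
Variable f : {poly 'F_2}.
Hypothesis firr : irreducible_poly f.
Hypothesis fX : f != 'X.

Definition T : K := tofrac 'X.
Definition Fq : K := tofrac f.
Definition E (x y : int) : K := T ^ x * Fq ^ y.

Lemma T_neq0 : T != 0. Proof. by rewrite tofrac_eq0 polyX_eq0. Qed.
Lemma Fq_neq0 : Fq != 0. Proof. by rewrite tofrac_eq0 (f_neq0 firr). Qed.
Lemma E_neq0 x y : E x y != 0.
Proof. by apply: mulf_neq0; apply: expfz_neq0; [apply: T_neq0 | apply: Fq_neq0]. Qed.

Lemma EM x y x' y' : E x y * E x' y' = E (x + x') (y + y').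
Proof.
rewrite /E (expfzDr _ _ T_neq0) (expfzDr _ _ Fq_neq0).
by rewrite -!mulrA; congr (_ * _); rewrite mulrCA.
Qed.

Lemma E_split (xp xn yp yn : nat) :
  E (xp%:Z - xn%:Z) (yp%:Z - yn%:Z) = tofrac ('X ^+ xp * f ^+ yp) / tofrac ('X ^+ xn * f ^+ yn).
Proof.
rewrite /E (expfzDr _ _ T_neq0) (expfzDr _ _ Fq_neq0) -!exprnN.
rewrite !tofracM !tofracXn -/T -/Fq invfM.
have e1 : forall (z : K) (n : nat), z ^ n%:Z = z ^+ n by [].
by rewrite !e1 mulrACA.
Qed.
Lemma f_pow_root0 k : ~~ root (f ^+ k) 0.
Proof. by rewrite /root horner_exp expf_eq0 negb_and (f_root0 firr fX) orbT. Qed.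

Lemma size_fpow k : size (f ^+ k) = ((size f).-1 * k).+1.
Proof.
rewrite -(size_exp f k) prednK // size_poly_gt0 expf_neq0 //; exact: f_neq0.
Qed.

Lemma E_poly p x y : p.[0] != 0 -> tofrac p = E x y ->
  x = 0 /\ ((size p).-1)%:Z = ((size f).-1)%:Z * y.
Proof.
move=> p0 e.
have [xp [xn [ex hx]]] := int_split x; have [yp [yn [ey hy]]] := int_split y.
move: e; rewrite ex ey E_split => e.
have pn0 : p != 0 by apply: contra_neq p0 => ->; rewrite horner0.
have dn0 : ('X ^+ xn * f ^+ yn) != 0.
  by rewrite mulf_neq0 ?expf_neq0 ?polyX_eq0 ?(f_neq0 firr).
have e2 : p * ('X ^+ xn * f ^+ yn) = 'X ^+ xp * f ^+ yp.
  apply: tofrac_inj; rewrite tofracM e mulfVK //; by rewrite tofrac_eq0.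
have em := congr1 (mup 0) e2.
rewrite mupMr ?mupMl ?f_pow_root0 ?mup0X in em; last by rewrite /root p0.
have [hxp hxn] : xp = 0%N /\ xn = 0%N by case: hx => h; rewrite h in em; rewrite -em h.
move: e2; rewrite hxp hxn !expr0 !mul1r => e2.
have es := congr1 (fun r : {poly 'F_2} => size r) e2; simpl in es.
rewrite size_mul ?expf_neq0 ?(f_neq0 firr) // !size_fpow in es.
split; first by rewrite subrr.
move: (size_poly_gt0 p); rewrite pn0 => sp.
move: es sp; set s := size p; set m := (size f).-1.
move=> es sp.
rewrite mulrBr -!PoszM; move: es; rewrite addnS /=.
set a := (m * yp)%N; set b := (m * yn)%N; lia.
all: by [].
Qed.
Lemma E00 : E 0 0 = 1. Proof. by rewrite /E !expr0z mulr1. Qed.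
Lemma E10 : E 1 0 = T. Proof. by rewrite /E expr1z expr0z mulr1. Qed.
Lemma E01 : E 0 1 = Fq. Proof. by rewrite /E expr1z expr0z mul1r. Qed.

Lemma EV x y : (E x y)^-1 = E (- x) (- y).
Proof.
apply: (mulfI (E_neq0 x y)); rewrite mulfV ?E_neq0 // EM !subrr E00 //.
Qed.

Lemma Ediv x y x' y' : E x y / E x' y' = E (x - x') (y - y').
Proof. by rewrite EV EM. Qed.

Lemma E_exp x y (n : nat) : E x y ^+ n = E (x * n%:Z) (y * n%:Z).
Proof.
elim: n => [|n IH]; first by rewrite expr0 !mulr0 E00.
by rewrite exprS IH EM -[n.+1]addn1 !PoszD !mulrDr !mulr1 [_ + x]addrC [_ + y]addrC.
Qed.

Lemma size_f_gt0 : (0 < (size f).-1)%N.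
Proof. by have := f_size firr; case: (size f) => [|[|k]]. Qed.

Lemma E_inj x y x' y' : E x y = E x' y' -> x = x' /\ y = y'.
Proof.
move=> e.
have e1 : tofrac 1 = E (x - x') (y - y') by rewrite -Ediv e mulfV ?E_neq0 // tofrac1.
have h0 : (1 : {poly 'F_2}).[0] != 0 by rewrite hornerC oner_neq0.
have [h1 h2] := E_poly h0 e1.
rewrite size_poly1 /= in h2.
move: h1 => /eqP; rewrite subr_eq0 => /eqP ->; split => //.
have mz : ((size f).-1)%:Z != 0 by rewrite eqz_nat -lt0n size_f_gt0.
by apply/eqP; rewrite -subr_eq0; move: h2 => /esym /eqP; rewrite mulf_eq0 (negPf mz).
Qed.
End F.


Section G.
Variable f : {poly 'F_2}.
Hypothesis firr : irreducible_poly f.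
Hypothesis fX : f != 'X.

Lemma Q_neq0 a b : tofrac ('X ^+ a * f ^+ b) != 0 :> K.
Proof. by rewrite tofrac_eq0 mulf_neq0 ?expf_neq0 ?polyX_eq0 ?(f_neq0 firr). Qed.

Lemma QM a b c d : tofrac ('X ^+ (a + c) * f ^+ (b + d)) =
   tofrac ('X ^+ a * f ^+ b) * tofrac ('X ^+ c * f ^+ d) :> K.
Proof. by rewrite -tofracM !exprD; congr tofrac; ring. Qed.

Lemma inRf_tofrac p : inRf f (tofrac p).
Proof. by exists p, 0%N, 0%N; rewrite !expr0 mulr1 tofrac1 divr1. Qed.

Lemma inRf_mul x y : inRf f x -> inRf f y -> inRf f (x * y).
Proof.
move=> [p [a [b ->]]] [q [c [d ->]]]; exists (p * q), (a + c)%N, (b + d)%N.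
by rewrite QM mulf_div [tofrac (p * q)]tofracM.
Qed.

Lemma inRf_add x y : inRf f x -> inRf f y -> inRf f (x + y).
Proof.
move=> [p [a [b ->]]] [q [c [d ->]]].
exists (p * ('X ^+ c * f ^+ d) + q * ('X ^+ a * f ^+ b)), (a + c)%N, (b + d)%N.
by rewrite QM addf_div ?Q_neq0 // [tofrac (_ + _)]tofracD [tofrac (p * _)]tofracM [tofrac (q * _)]tofracM.
Qed.

Lemma inRf_E x y : inRf f (E f x y).
Proof.
have [xp [xn [-> _]]] := int_split x; have [yp [yn [-> _]]] := int_split y.
by rewrite E_split //; eexists; eexists; eexists.
Qed.

Lemma inRf_1 : inRf f 1. Proof. by rewrite -tofrac1; apply: inRf_tofrac. Qed.
End G.


Definition pc : {rmorphism 'F_2 -> K} := (@tofrac _ \o polyC).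

Section H.
Variable f : {poly 'F_2}.
Hypothesis firr : irreducible_poly f.
Hypothesis fX : f != 'X.
Variable phi : K -> K.
Hypothesis Haut : is_ring_aut_Rf f phi.

Lemma phiR x : inRf f x -> inRf f (phi x).
Proof. by move: Haut => [H _]; apply: H. Qed.
Lemma phiD x y : inRf f x -> inRf f y -> phi (x + y) = phi x + phi y.
Proof. by move: Haut => [_ [H _]]; apply: H. Qed.
Lemma phiM x y : inRf f x -> inRf f y -> phi (x * y) = phi x * phi y.
Proof. by move: Haut => [_ [_ [H _]]]; apply: H. Qed.
Lemma phi1 : phi 1 = 1.
Proof. by move: Haut => [_ [_ [_ [H _]]]]; apply: H. Qed.
Lemma phiI x y : inRf f x -> inRf f y -> phi x = phi y -> x = y.
Proof. by move: Haut => [_ [_ [_ [_ [H _]]]]]; apply: H. Qed.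
Lemma phiS y : inRf f y -> exists2 x, inRf f x & phi x = y.
Proof. by move: Haut => [_ [_ [_ [_ [_ H]]]]]; apply: H. Qed.

Lemma inRf_0 : inRf f 0. Proof. by rewrite -tofrac0; apply: inRf_tofrac. Qed.

Lemma phi0 : phi 0 = 0.
Proof.
apply: (addrI (phi 0)); rewrite addr0 -phiD ?addr0 //; exact: inRf_0.
Qed.

Lemma phi_pc c : phi (pc c) = pc c.
Proof.
case: (F2_cases c) => ->; rewrite ?rmorph0 ?rmorph1; [exact: phi0 | exact: phi1].
Qed.

Lemma phi_poly p : phi (tofrac p) = (map_poly pc p).[phi (T)].
Proof.
elim/poly_ind: p => [|p c IH]; first by rewrite tofrac0 phi0 rmorph0 horner0.
have -> : tofrac (p * 'X + c%:P) = tofrac p * T + pc c.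
  by rewrite tofracD tofracM.
rewrite phiD ?phiM ?phi_pc ?IH; try by apply: inRf_mul || apply: inRf_tofrac.
  by rewrite rmorphD rmorphM /= map_polyX map_polyC hornerMXaddC.
all: try apply: inRf_mul; apply: inRf_tofrac.
Qed.

Lemma unit_E x y : inRf f x -> inRf f y -> x * y = 1 -> exists a b, x = E f a b.
Proof.
move=> [p [a [b ->]]] [q [c [d ->]]].
rewrite mulf_div -[tofrac p * tofrac q]tofracM -QM => /divr1_eq /tofrac_inj /(div_unit firr) [i [j ->]].
exists (i%:Z - a%:Z), (j%:Z - b%:Z); by rewrite (E_split firr).
Qed.

Lemma phi_unit_E x y : inRf f x -> inRf f y -> x * y = 1 -> exists a b, phi x = E f a b.
Proof.
move=> hx hy e; apply: (unit_E (y := phi y)); try by apply: phiR.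
by rewrite -phiM // e phi1.
Qed.

Lemma TV : T * E f (-1) 0 = 1.
Proof. by rewrite -(E10 f) (EM firr) subrr addr0 E00. Qed.
Lemma FV : Fq f * E f 0 (-1) = 1.
Proof. by rewrite -(E01 f) (EM firr) ?subrr ?addr0 ?add0r ?E00. Qed.

Lemma inRf_T : inRf f T. Proof. exact: inRf_tofrac. Qed.
Lemma inRf_F : inRf f (Fq f). Proof. exact: inRf_tofrac. Qed.

Variables a b c d : int.
Hypothesis hT : phi T = E f a b.
Hypothesis hF : phi (Fq f) = E f c d.

Lemma phiF_eval : (map_poly pc f).[E f a b] = E f c d.
Proof. by rewrite -hT -phi_poly. Qed.

Lemma phi_mono (n k : nat) :
  phi (tofrac ('X ^+ n * f ^+ k)) = E f (a * n%:Z + c * k%:Z) (b * n%:Z + d * k%:Z).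
Proof.
rewrite phi_poly rmorphM /= !rmorphXn /= map_polyX hornerM !horner_exp hornerX.
by rewrite hT phiF_eval !(E_exp firr) (EM firr).
Qed.

Lemma phi_E i j : phi (E f i j) = E f (a * i + c * j) (b * i + d * j).
Proof.
have [ip [in_ [-> _]]] := int_split i; have [jp [jn [-> _]]] := int_split j.
rewrite (E_split firr).
set N := tofrac _; set D := tofrac _.
have hN : inRf f N by apply: inRf_tofrac.
have hD : inRf f D by apply: inRf_tofrac.
have hx : inRf f (N / D) by rewrite /N /D -(E_split firr); apply: (inRf_E firr).
have e : N / D * D = N by rewrite mulfVK // (Q_neq0 firr).
have := congr1 phi e; rewrite phiM // !phi_mono => e2.
rewrite -[LHS](mulfK (E_neq0 firr (a * in_ + c * jn) (b * in_ + d * jn))) e2 (Ediv firr).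
by congr E; ring.
Qed.
End H.


Section P.
Variable f : {poly 'F_2}.
Hypothesis firr : irreducible_poly f.
Hypothesis fX : f != 'X.

Definition Fh (A B : {poly 'F_2}) : {poly 'F_2} :=
  \sum_(i < (size f).-1.+1) f`_i *: (A ^+ i * B ^+ ((size f).-1 - i)).

Lemma sizefE : size f = (size f).-1.+1.
Proof. by rewrite prednK // ltnW // (f_size firr). Qed.

Lemma pc_inj : injective pc.
Proof. by move=> x y /= /tofrac_inj /polyC_inj. Qed.

Lemma Fh_eval (A B : {poly 'F_2}) : B != 0 ->
  (map_poly pc f).[tofrac A / tofrac B] * (tofrac B) ^+ (size f).-1 = tofrac (Fh A B).
Proof.
move=> B0.
have B0' : tofrac B != 0 :> K by rewrite tofrac_eq0.
rewrite horner_coef size_map_poly.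
rewrite sizefE mulr_suml /Fh rmorph_sum /=; apply: eq_bigr => i _.
rewrite coef_map -mul_polyC !tofracM /=.
have hi : (i <= (size f).-1)%N by rewrite -ltnS.
rewrite -mulrA; congr (_ * _).
have -> : tofrac B ^+ (size f).-1 = tofrac B ^+ i * tofrac B ^+ ((size f).-1 - i) :> K.
  by rewrite -exprD subnKC.
rewrite mulrA expr_div_n divfK ?expf_neq0 //.
by rewrite !tofracXn.
Qed.

Lemma Fh_horner0 A B : (Fh A B).[0] =
  \sum_(i < (size f).-1.+1) f`_i * (A.[0] ^+ i * B.[0] ^+ ((size f).-1 - i)).
Proof.
rewrite /Fh horner_sum; apply: eq_bigr => i _.
by rewrite hornerZ hornerM !horner_exp.
Qed.

Lemma Fh_root0 A B : ~~ ((A.[0] == 0) && (B.[0] == 0)) ->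
  ~~ root f 0 -> ~~ root f 1 -> (Fh A B).[0] != 0.
Proof.
move=> hAB r0 r1; rewrite Fh_horner0.
have hf : forall a : 'F_2, \sum_(i < (size f).-1.+1) f`_i * (a ^+ i * 1 ^+ ((size f).-1 - i)) = f.[a].
  move=> a; rewrite horner_coef sizefE; apply: eq_bigr => i _; by rewrite expr1n mulr1.
case: (F2_cases B.[0]) => eB; rewrite eB.
  case: (F2_cases A.[0]) => eA; first by move: hAB; rewrite eA eB eqxx.
  rewrite eA big_ord_recr /= big1 ?add0r.
    by rewrite subnn !expr0 expr1n mulr1 -lead_coefE (f_lead firr) oner_neq0.
  move=> i _; rewrite expr1n mul1r expr0n.
  have -> : ((size f).-1 - i == 0)%N = false by apply/negbTE; rewrite subn_eq0 -ltnNge ltn_ord.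
  by rewrite mulr0.
by rewrite hf; case: (F2_cases A.[0]) => ->.
Qed.

Lemma size_pow_mul (A B : {poly 'F_2}) i j : A != 0 -> B != 0 ->
  size (A ^+ i * B ^+ j) = ((size A).-1 * i + (size B).-1 * j).+1.
Proof.
move=> A0 B0.
have hs : forall (P : {poly 'F_2}) k, P != 0 -> size (P ^+ k) = ((size P).-1 * k).+1.
  by move=> P k P0; rewrite -size_exp prednK // size_poly_gt0 expf_neq0.
by rewrite size_mul ?expf_neq0 // !hs // addSn addnS.
Qed.

Lemma coef_top (p : {poly 'F_2}) n : size p = n.+1 -> p`_n = 1.
Proof.
move=> sp; apply: F2_neq0.
have p0 : p != 0 by rewrite -size_poly_gt0 sp.
by rewrite -[n]/(n.+1.-1) -sp -lead_coefE lead_coef_eq0.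
Qed.

Lemma Fh_size A B : A != 0 -> B != 0 -> ~~ root f 1 ->
  (size (Fh A B)).-1 = ((size f).-1 * maxn (size A).-1 (size B).-1)%N.
Proof.
move=> A0 B0 r1.
set m := (size f).-1; set dA := (size A).-1; set dB := (size B).-1.
set N := (m * maxn dA dB)%N.
have bnd : forall i : 'I_m.+1, (dA * i + dB * (m - i) <= N)%N.
  move=> i; have hi : (i <= m)%N by rewrite -ltnS.
  apply: (@leq_trans (maxn dA dB * i + maxn dA dB * (m - i))%N).
    by rewrite leq_add // leq_mul2r ?leq_maxl ?leq_maxr orbT.
  by rewrite -mulnDr subnKC // mulnC.
have hle : (size (Fh A B) <= N.+1)%N.
  rewrite /Fh; apply: leq_trans (size_sum _ _ _) _; apply/bigmax_leqP => i _.
  by apply: leq_trans (size_scale_leq _ _) _; rewrite size_pow_mul // ltnS; apply: bnd.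
have hc : forall i : 'I_m.+1,
    (A ^+ i * B ^+ (m - i))`_N = if (dA * i + dB * (m - i) == N)%N then 1 else 0.
  move=> i; case: ifP => [/eqP e | /negbT ne].
    by apply: coef_top; rewrite size_pow_mul // e.
  apply: nth_default; rewrite size_pow_mul //.
  by rewrite ltn_neqAle ne bnd.
have hN : (Fh A B)`_N != 0.
  rewrite /Fh coef_sum.
  under eq_bigr => i _ do rewrite coefZ hc.
  case: (ltngtP dA dB) => hAB.
  - rewrite big_ord_recl /= subn0 muln0 add0n mulnC /N (maxn_idPr (ltnW hAB)) eqxx.
    rewrite big1 ?addr0 ?mulr1 ?(f_coef0 firr fX) ?oner_neq0 //.
    move=> i _; case: ifP; last by rewrite mulr0.
    move=> /eqP e; exfalso; move: e; rewrite /bump /=.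
    have hi : (i < m)%N by apply: ltn_ord.
    move: hi hAB; set k := nat_of_ord i; move=> hi hAB e.
    have e2 : (m * dB = dB * (1 + k) + dB * (m - (1 + k)))%N by rewrite -mulnDr subnKC // mulnC.
    rewrite e2 in e; move/eqP: e; rewrite eqn_add2r eqn_mul2r /= => /eqP h.
    by move: hAB; rewrite h ltnn.
  - rewrite big_ord_recr /= subnn muln0 addn0 mulnC /N (maxn_idPl (ltnW hAB)) eqxx.
    rewrite big1 ?add0r ?mulr1.
      by rewrite -lead_coefE (f_lead firr) oner_neq0.
    move=> i _; case: ifP; last by rewrite mulr0.
    move=> /eqP e; exfalso; move: e.
    have hi : (i < m)%N by apply: ltn_ord.
    move: hi hAB; set k := nat_of_ord i; move=> hi hAB e.
    have e2 : (m * dA = dA * k + dA * (m - k))%N by rewrite -mulnDr subnKC ?(ltnW hi) // mulnC.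
    rewrite e2 in e; move/eqP: e; rewrite eqn_add2l eqn_mul2r subn_eq0 leqNgt hi /= => /eqP h.
    by move: hAB; rewrite h ltnn.
  - have hf : \sum_(i < m.+1) f`_i * 1 = f.[1].
      rewrite horner_coef sizefE; apply: eq_bigr => i _; by rewrite expr1n.
    have ht : forall i : 'I_m.+1, (dA * i + dB * (m - i) == N)%N.
      move=> i; have hi : (i <= m)%N by rewrite -ltnS.
      by rewrite /N hAB maxnn -mulnDr subnKC // mulnC.
    under eq_bigr => i _ do rewrite ht.
    by rewrite hf.
have hgt : (N < size (Fh A B))%N.
  rewrite ltnNge; apply/negP => h; move: hN; by rewrite nth_default ?eqxx.
have -> : size (Fh A B) = N.+1 by apply/eqP; rewrite eqn_leq hle hgt.
by [].
Qed.

Lemma Fh_rec : Fh 1 'X = reciprocal f.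
Proof.
rewrite /Fh /reciprocal; set m := (size f).-1.
have sf : size f = m.+1 by rewrite /m -sizefE.
rewrite sf poly_def (reindex_inj rev_ord_inj) /=; apply: eq_bigr => i _.
have hi : (i <= m)%N by rewrite -ltnS.
by rewrite expr1n mul1r subSS subKn // subn1 /=.
Qed.
End P.


Lemma prod1 (x y : int) : x * y = 1 -> x = 1 \/ x = -1.
Proof.
move=> h; have := @intUnitRing.unitzPl x y; rewrite mulrC => /(_ h).
by rewrite qualifE => /orP [] /eqP; [left|right].
Qed.
Lemma pm1 (x y : int) : (x * y = 1 \/ x * y = -1) -> (x = 1 \/ x = -1) /\ (y = 1 \/ y = -1).
Proof.
case=> h.
  split; [exact: prod1 h | apply: (@prod1 y x); by rewrite mulrC].
have h' : x * (- y) = 1 by rewrite mulrN h opprK.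
split; first exact: prod1 h'.
have := @prod1 (- y) x; rewrite mulrC h' => /(_ erefl).
by case=> e; [right; rewrite -[y]opprK e | left; rewrite -[y]opprK e opprK].
Qed.

Lemma intlem (a b c d i j k l : int) (m ap an bp bn : nat) :
  (1 <= m)%N -> a = ap%:Z - an%:Z -> (ap = 0 \/ an = 0)%N ->
  b = bp%:Z - bn%:Z -> (bp = 0 \/ bn = 0)%N ->
  c + an%:Z * m%:Z = 0 ->
  (m * maxn (ap + m * bp) (an + m * bn))%:Z = m%:Z * (d + bn%:Z * m%:Z) ->
  a * i + c * j = 1 -> b * i + d * j = 0 -> a * k + c * l = 0 -> b * k + d * l = 1 ->
  (a = 1 /\ b = 0) \/ (a = -1 /\ b = 0 /\ c = - m%:Z /\ d = 1).
Proof.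
move=> hm ea hA eb hB ec emax e1 e2 e3 e4.
have hD : (a * d - b * c) * (i * l - j * k) = 1.
  have : (a * i + c * j) * (b * k + d * l) - (b * i + d * j) * (a * k + c * l) = 1.
    by rewrite e1 e2 e4 mul0r subr0 mulr1.
  by move=> <-; ring.
have {hD} /prod1 hD := hD.
have emx : maxn (ap + m * bp) (an + m * bn) = (d + bn%:Z * m%:Z) :> int.
  apply: (mulfI (x := m%:Z)); first by rewrite eqz_nat -lt0n.
  by rewrite -emax PoszM.
clear emax e1 e2 e3 e4.
have hm' : (1 <= m%:Z) by rewrite lez_nat.
case: hA => h0; rewrite h0 in ea ec emx; case: hB => h1; rewrite h1 in eb emx;
  rewrite ?add0n ?addn0 ?muln0 ?mul0n in emx.
- subst a b; rewrite max0n in emx.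
  have := @pm1 (- an%:Z) (an%:Z + bn%:Z * m%:Z).
  have hx : (- an%:Z) * (an%:Z + bn%:Z * m%:Z) = (0 - an%:Z) * d - (0 - bn%:Z) * c.
    have -> : c = - (an%:Z * m%:Z) by apply/eqP; rewrite -addr_eq0 ec.
    have hd : d = an%:Z by lia.
    rewrite hd; ring.
  rewrite hx => /(_ hD) [ha hb].
  right; nia.
- subst a b.
  have := @pm1 (- an%:Z) (d - bp%:Z * m%:Z).
  have hx : (- an%:Z) * (d - bp%:Z * m%:Z) = (0 - an%:Z) * d - (bp%:Z - 0) * c.
    have -> : c = - (an%:Z * m%:Z) by apply/eqP; rewrite -addr_eq0 ec.
    ring.
  rewrite hx => /(_ hD) [ha hb].
  case: (leqP (m * bp) an) emx => hh emx.
    right; nia.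
  nia.
- subst a b.
  have := @pm1 (ap%:Z) d.
  have hx : ap%:Z * d = (ap%:Z - 0) * d - (0 - bn%:Z) * c.
    have -> : c = 0 by move: ec; rewrite mul0r addr0.
    ring.
  rewrite hx => /(_ hD) [ha hb].
  case: (leqP ap (m * bn)) emx => hh emx.
    nia.
  left; nia.
- subst a b; rewrite maxn0 in emx.
  have := @pm1 (ap%:Z) (ap%:Z + m%:Z * bp%:Z).
  have hx : ap%:Z * (ap%:Z + m%:Z * bp%:Z) = (ap%:Z - 0) * d - (bp%:Z - 0) * c.
    have -> : c = 0 by move: ec; rewrite mul0r addr0.
    rewrite -PoszM -PoszD emx; ring.
  rewrite hx => /(_ hD) [ha hb].
  left; nia.
Qed.

Lemma map_pc_T (p : {poly 'F_2}) : (map_poly pc p).[T] = tofrac p.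
Proof.
elim/poly_ind: p => [|p c IH]; first by rewrite rmorph0 horner0 tofrac0.
rewrite rmorphD rmorphM /= map_polyX map_polyC hornerMXaddC IH.
by rewrite tofracD tofracM.
Qed.

Unset Implicit Arguments.
Theorem mainTheorem13 (f : {poly 'F_2})
  (firr : irreducible_poly f) (fX : f != 'X) (fnsr : ~ self_reciprocal f)
  (phi : {fraction {poly 'F_2}} -> {fraction {poly 'F_2}}) :
  is_ring_aut_Rf f phi -> forall x, inRf f x -> phi x = x.
Proof.
move=> Haut.
have [a [b hT]] := phi_unit_E firr Haut (inRf_T f) (inRf_E firr (-1) 0) (TV firr).
have [c [d hF]] := phi_unit_E firr Haut (inRf_F f) (inRf_E firr 0 (-1)) (FV firr).
have surjE : forall y y', inRf f y -> inRf f y' -> y * y' = 1 -> exists i j, phi (E f i j) = y.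
  move=> y y' hy hy' e.
  have [w hw pw] := phiS Haut hy; have [w' hw' pw'] := phiS Haut hy'.
  have ww : w * w' = 1.
    apply: (phiI Haut (inRf_mul hw hw') (inRf_1 f)).
    by rewrite (phiM Haut hw hw') pw pw' e (phi1 Haut).
  have [i [j ew]] := unit_E firr hw hw' ww.
  by exists i, j; rewrite -ew.
have [i [j e1]] := surjE _ _ (inRf_T f) (inRf_E firr (-1) 0) (TV firr).
rewrite (phi_E firr Haut hT hF) -(E10 f) in e1.
have [e1a e1b] := E_inj firr fX e1.
have [k [l e2]] := surjE _ _ (inRf_F f) (inRf_E firr 0 (-1)) (FV firr).
rewrite (phi_E firr Haut hT hF) -(E01 f) in e2.
have [e2a e2b] := E_inj firr fX e2.
have [ap [an [ea hA]]] := int_split a; have [bp [bn [eb hB]]] := int_split b.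
have ev := phiF_eval Haut hT hF.
rewrite ea eb (E_split firr) in ev.
set A := 'X ^+ ap * f ^+ bp in ev; set B := 'X ^+ an * f ^+ bn in ev.
have f0 : f != 0 := f_neq0 firr.
have A0 : A != 0 by rewrite mulf_neq0 ?expf_neq0 ?polyX_eq0.
have B0 : B != 0 by rewrite mulf_neq0 ?expf_neq0 ?polyX_eq0.
have eF := Fh_eval firr A B0; rewrite ev in eF.
have tB : tofrac B = E f an bn.
  have := E_split firr an 0 bn 0; rewrite !subr0 !expr0 mulr1 tofrac1 divr1 => ->.
  by [].
rewrite tB (E_exp firr) (EM firr) in eF.
have fr0 : f.[0] != 0 := f_root0 firr fX.
have h0 : (Fh f A B).[0] != 0.
  apply: (Fh_root0 firr _ (f_root0 firr fX) (f_root1 firr fnsr)).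
  rewrite /A /B !hornerM !horner_exp !hornerX.
  case: hA => ->; rewrite expr0 mul1r.
    by rewrite expf_eq0 (negPf fr0) andbF.
  by rewrite expf_eq0 (negPf fr0) !andbF.
have [hc hs] := E_poly firr fX h0 (esym eF).
rewrite (Fh_size firr fX A0 B0 (f_root1 firr fnsr)) /A /B !size_pow_mul ?polyX_eq0 // size_polyX /= !mul1n in hs.
have m1 : (1 <= (size f).-1)%N := size_f_gt0 firr.
have := intlem m1 ea hA eb hB hc hs e1a e1b e2a e2b.
case=> [[ha hb] | [ha [hb [hcm hd]]]].
  rewrite ha hb E10 in hT.
  have hp : forall p, phi (tofrac p) = tofrac p.
    by move=> p; rewrite (phi_poly Haut) hT map_pc_T.
  move=> x [p [n [q ->]]].
  set Q := tofrac ('X ^+ n * f ^+ q).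
  have Q0 : Q != 0 by apply: (Q_neq0 firr).
  have hQ : inRf f Q by apply: inRf_tofrac.
  have hx : inRf f (tofrac p / Q) by exists p, n, q.
  have e : tofrac p / Q * Q = tofrac p by rewrite mulfVK.
  have := congr1 phi e; rewrite (phiM Haut hx hQ) hp /Q hp -/Q => e'.
  by rewrite -[LHS](mulfK Q0) e'.
exfalso; apply: fnsr.
have [hap [han [hbp hbn]]] : [/\ ap = 0, an = 1, bp = 0 & bn = 0]%N.
  move: ha hb ea eb hA hB => -> -> ea eb hA hB.
  have ea' : an%:Z = ap%:Z + 1 by rewrite -[1]opprK ea; ring.
  have eb' : bp%:Z = bn%:Z by apply/eqP; rewrite -subr_eq0 -eb.
  clear ea eb; split; lia.
move: eF; rewrite /A /B hap han hbp hbn !expr0 !mulr1 hcm hd.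
rewrite mul1r addNr mul0r addr0 E01 expr1 => /tofrac_inj e.
by rewrite /self_reciprocal -(Fh_rec firr) -e.
Qed.
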